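(* For every $i\in\{0,\dots,m-1\}$ and every real $B$ with $B_i\le B\le\kappa B_{i+1}$, $$\Lambda_{B,\,mB\beta^{-1}}=\langle \operatorname{pr}(b_1),\dots,\operatorname{pr}(b_i)\rangle .$$
   Context: Let $m\ge2$ and $1\le p\le m$ be integers and $P\in\mathbb{R}^{m\times p}$. Vectors of $\mathbb{Z}^m$, $\mathbb{R}^m$ are row vectors and all norms $\|\cdot\|$ are Euclidean. Let $\Lambda=\{x\in\mathbb{Z}^m : xP=0\}$. For $B,\varepsilon>0$, $\Lambda_{B,\varepsilon}$ denotes the subgroup of $\mathbb{Z}^m$ generated by $\{x\in\mathbb{Z}^m : \|x\|\le B,\ \|xP\|<\varepsilon\}$. Let $\beta>0$ and let $P_\beta\in\mathbb{Z}^{m\times p}$ be such that every entry of $P_\beta-\beta P$ lies in $[-\tfrac12,\tfrac12]$. Let $R\subset\mathbb{Z}^{p+m}$ be the lattice spanned by the rows of the $m\times(p+m)$ matrix $[\,P_\beta\mid I_m\,]$, and let $b_1,\dots,b_m$ be a basis of $R$ that is LLL-reduced (Lenstra–Lenstra–Lovász, with parameter $3/4$) and satisfies $\|b_1\|\le\dots\le\|b_m\|$. Set $B_0=0$, $B_i=\|b_i\|$ for $1\le i\le m$, $\kappa=m^{-1}2^{-(m+1)/2}$, and let $\operatorname{pr}\colon\mathbb{Z}^{p+m}\to\mathbb{Z}^m$ be the projection onto the last $m$ coordinates. *)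

(* Defs.v *)
(* Reals are modelled by an arbitrary Archimedean real closed
   field R (this includes the real numbers). *)
From HB Require Import structures.
From mathcomp Require Import all_boot all_order all_algebra.
Set Implicit Arguments. Unset Strict Implicit. Unset Printing Implicit Defensive.
Import Order.TTheory GRing.Theory Num.Theory.
Local Open Scope ring_scope.

Section Defs.
Variable R : archiRcfType.

Definition intmx (k n : nat) (x : 'M[int]_(k, n)) : 'M[R]_(k, n) :=
  map_mx (fun z : int => z%:~R) x.

Definition dotv (n : nat) (u v : 'rV[R]_n) : R := \sum_(j < n) u 0 j * v 0 j.
Definition rnorm (n : nat) (v : 'rV[R]_n) : R := Num.sqrt (dotv v v).
Definition znorm (n : nat) (x : 'rV[int]_n) : R := rnorm (intmx x).

Definition zspan (n : nat) (S : 'rV[int]_n -> Prop) (v : 'rV[int]_n) : Prop :=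
  exists (k : nat) (f : 'I_k -> 'rV[int]_n) (c : 'I_k -> int),
    (forall t, S (f t)) /\ v = \sum_(t < k) f t *~ c t.

Definition Lambda_Beps (m p : nat) (P : 'M[R]_(m, p)) (B eps : R)
  : 'rV[int]_m -> Prop :=
  zspan (fun x : 'rV[int]_m => znorm x <= B /\ rnorm (intmx x *m P) < eps).

Definition row_lattice (k n : nat) (A : 'M[int]_(k, n)) : 'rV[int]_n -> Prop :=
  zspan (fun v => exists i : 'I_k, v = row i A).

Definition lattice_basis (k n : nat) (Bm A : 'M[int]_(k, n)) : Prop :=
  (forall v, row_lattice Bm v <-> row_lattice A v) /\
  (forall c : 'rV[int]_k, c *m Bm = 0 -> c = 0).

Fixpoint gs_list (n : nat) (f : nat -> 'rV[R]_n) (k : nat) : seq 'rV[R]_n :=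
  match k with
  | 0 => [::]
  | k'.+1 =>
      let l := gs_list f k' in
      rcons l (f k' - \sum_(v <- l) (dotv (f k') v / dotv v v) *: v)
  end.

Definition gs_vec (n : nat) (f : nat -> 'rV[R]_n) (i : nat) : 'rV[R]_n :=
  nth 0 (gs_list f i.+1) i.

Definition gs_mu (n : nat) (f : nat -> 'rV[R]_n) (i j : nat) : R :=
  dotv (f i) (gs_vec f j) / dotv (gs_vec f j) (gs_vec f j).

(* the i-th row (0-indexed) of an integer matrix, as a real vector; 0 beyond *)
Definition rowf (k n : nat) (Bm : 'M[int]_(k, n)) (i : nat) : 'rV[R]_n :=
  if insub i is Some i' then intmx (row i' Bm) else 0.

Definition LLL_reduced (k n : nat) (Bm : 'M[int]_(k, n)) : Prop :=
  let f := rowf Bm in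
  (forall i j : nat, (j < i < k)%N -> `|gs_mu f i j| <= 2^-1) /\
  (forall i : nat, (0 < i < k)%N ->
     (3 / 4) * dotv (gs_vec f i.-1) (gs_vec f i.-1) <=
     dotv (gs_vec f i) (gs_vec f i)
     + gs_mu f i i.-1 ^+ 2 * dotv (gs_vec f i.-1) (gs_vec f i.-1)).

(* B_0 = 0, B_i = |b_i| (1-indexed) *)
Definition Bnorm (k n : nat) (Bm : 'M[int]_(k, n)) (i : nat) : R :=
  if i is i'.+1 then rnorm (rowf Bm i') else 0.

Definition kappa (m : nat) : R := (m%:R)^-1 / Num.sqrt (2 ^+ m.+1).

End Defs.

(* Main.v *)
Require Import Defs.
From HB Require Import structures.
From mathcomp Require Import all_boot all_order all_algebra.
From mathcomp Require Import ring lra zify.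
Import Order.TTheory GRing.Theory Num.Theory.
Local Open Scope ring_scope.
Set Implicit Arguments. Unset Strict Implicit. Unset Printing Implicit Defensive.


Section Dot.
Variable R : archiRcfType.
Variable n : nat.
Implicit Types u v w : 'rV[R]_n.

Lemma dotvC u v : dotv u v = dotv v u.
Proof. by apply: eq_bigr => j _; rewrite mulrC. Qed.

Lemma dotvDl u v w : dotv (u + v) w = dotv u w + dotv v w.
Proof. by rewrite /dotv -big_split; apply: eq_bigr => j _; rewrite !mxE mulrDl. Qed.

Lemma dotvDr u v w : dotv w (u + v) = dotv w u + dotv w v.
Proof. by rewrite dotvC dotvDl !(dotvC w). Qed.

Lemma dotvZl a u v : dotv (a *: u) v = a * dotv u v.
Proof. by rewrite /dotv mulr_sumr; apply: eq_bigr => j _; rewrite !mxE mulrA. Qed.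

Lemma dotvZr a u v : dotv u (a *: v) = a * dotv u v.
Proof. by rewrite dotvC dotvZl dotvC. Qed.

Lemma dotvNl u v : dotv (- u) v = - dotv u v.
Proof. by rewrite -scaleN1r dotvZl mulN1r. Qed.

Lemma dotvNr u v : dotv u (- v) = - dotv u v.
Proof. by rewrite dotvC dotvNl dotvC. Qed.

Lemma dotvBl u v w : dotv (u - v) w = dotv u w - dotv v w.
Proof. by rewrite dotvDl dotvNl. Qed.

Lemma dotv0l v : dotv 0 v = 0.
Proof. by rewrite /dotv big1 // => j _; rewrite mxE mul0r. Qed.

Lemma dotv0r v : dotv v 0 = 0.
Proof. by rewrite dotvC dotv0l. Qed.

Lemma dotv_suml I (r : seq I) (P : pred I) (F : I -> 'rV[R]_n) v :
  dotv (\sum_(t <- r | P t) F t) v = \sum_(t <- r | P t) dotv (F t) v.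
Proof.
elim/big_rec2: _ => [|t x y _ <-]; first by rewrite dotv0l.
by rewrite dotvDl.
Qed.

Lemma dotv_ge0 v : 0 <= dotv v v.
Proof. by apply: sumr_ge0 => j _; rewrite -expr2 sqr_ge0. Qed.

Lemma dotv_eq0 v : dotv v v = 0 -> v = 0.
Proof.
move=> h; apply/rowP => j; rewrite mxE.
have /eqP := h; rewrite psumr_eq0 => [/allP hj|k _]; last by rewrite -expr2 sqr_ge0.
have := hj j (mem_index_enum j); rewrite -expr2 sqrf_eq0 => /eqP ->. by [].
Qed.

Lemma rnorm_sq v : rnorm v ^+ 2 = dotv v v.
Proof. by rewrite /rnorm sqr_sqrtr // dotv_ge0. Qed.

Lemma rnorm_ge0 v : 0 <= rnorm v.
Proof. exact: sqrtr_ge0. Qed.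

Lemma rnorm_le u v : (rnorm u <= rnorm v) = (dotv u u <= dotv v v).
Proof. by rewrite /rnorm ler_sqrt // dotv_ge0. Qed.

End Dot.


Section GS.
Variable R : archiRcfType.
Variable n : nat.
Variable f : nat -> 'rV[R]_n.
Notation g := (gs_vec f).
Notation G j := (dotv (g j) (g j)).

Lemma gs_size k : size (gs_list f k) = k.
Proof. by elim: k => [//|k' IH'] /=; rewrite size_rcons IH'. Qed.

Lemma gs_nth k j : (j < k)%N -> nth 0 (gs_list f k) j = g j.
Proof.
elim: k => [//|k IH] hj.
rewrite /gs_vec; have [hjk|hjk] := ltnP j k.
  by rewrite /= nth_rcons gs_size hjk IH.
have -> : j = k by apply/eqP; rewrite eqn_leq hjk -ltnS hj.
by [].
Qed.

Lemma gs_list_map k : gs_list f k = [seq g j | j <- iota 0 k].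
Proof.
apply: (@eq_from_nth _ 0); first by rewrite size_map size_iota gs_size.
move=> j; rewrite gs_size => hj.
by rewrite gs_nth // (nth_map 0%N) ?size_iota // nth_iota.
Qed.

Definition mu i j := dotv (f i) (g j) / G j.

Lemma gs_eq k : g k = f k - \sum_(0 <= j < k) mu k j *: g j.
Proof.
rewrite [LHS]/gs_vec /= nth_rcons gs_size ltnn eqxx gs_list_map big_map.
by rewrite /index_iota subn0.
Qed.

Lemma gs_orth k j : (j < k)%N -> dotv (g k) (g j) = 0.
Proof.
elim/ltn_ind: k j => k IH j hjk.
have Ho : forall l, (l < k)%N -> l != j -> dotv (g l) (g j) = 0.
  move=> l hl hlj; have [hjl|hlj'] := ltnP j l; first exact: IH.
  rewrite dotvC; apply: IH; first by apply: leq_ltn_trans hjk.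
  by rewrite ltn_neqAle hlj' andbT.
rewrite {1}gs_eq dotvBl dotv_suml big_mkord (bigD1 (Ordinal hjk)) //=.
rewrite big1 ?addr0; last first.
  move=> l hl; rewrite dotvZl Ho ?mulr0 //.
rewrite dotvZl /mu.
have [h0|h0] := eqVneq (G j) 0.
  by rewrite (dotv_eq0 h0) dotv0r mul0r mul0r subrr.
by rewrite divfK // subrr.
Qed.

Lemma gs_orth' k j : k != j -> dotv (g k) (g j) = 0.
Proof.
case: (ltngtP j k) => [h _|h _|->]; [exact: gs_orth| |by move=> /eqP].
by rewrite dotvC gs_orth.
Qed.


Definition inspan k v := exists a : nat -> R, v = \sum_(0 <= l < k) a l *: g l.

Lemma inspan0 k : inspan k 0.
Proof. by exists (fun _ => 0); rewrite big1 // => l _; rewrite scale0r. Qed.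

Lemma inspanD k u v : inspan k u -> inspan k v -> inspan k (u + v).
Proof.
move=> [a ->] [b ->]; exists (fun l => a l + b l).
by rewrite -big_split; apply: eq_bigr => l _; rewrite scalerDl.
Qed.

Lemma inspanZ k c v : inspan k v -> inspan k (c *: v).
Proof.
move=> [a ->]; exists (fun l => c * a l).
by rewrite scaler_sumr; apply: eq_bigr => l _; rewrite scalerA.
Qed.

Lemma inspanN k v : inspan k v -> inspan k (- v).
Proof. by move=> h; rewrite -scaleN1r; apply: inspanZ. Qed.

Lemma inspanB k u v : inspan k u -> inspan k v -> inspan k (u - v).
Proof. by move=> hu hv; apply: inspanD => //; apply: inspanN. Qed.

Lemma inspan_sum k I (r : seq I) (P : pred I) (F : I -> 'rV[R]_n) :
  (forall t, P t -> inspan k (F t)) -> inspan k (\sum_(t <- r | P t) F t).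
Proof.
move=> h; elim/big_rec: _ => [|t x Pt hx]; first exact: inspan0.
by apply: inspanD => //; apply: h.
Qed.

Lemma inspan_mono k k' v : (k <= k')%N -> inspan k v -> inspan k' v.
Proof.
move=> hk [a ->]; exists (fun l => if (l < k)%N then a l else 0).
rewrite (big_cat_nat (leq0n k) hk) /= [X in _ = _ + X]big1_seq ?addr0.
  by apply: eq_big_nat => l /andP[_ ->].
move=> l /andP[_]; rewrite mem_index_iota => /andP[hl _].
by rewrite ltnNge hl scale0r.
Qed.

Lemma inspan_g j k : (j < k)%N -> inspan k (g j).
Proof.
move=> hj; exists (fun l => (l == j)%:R).
rewrite (big_cat_nat (leq0n j) (ltnW hj)) /= [X in _ = _ + X](big_ltn hj) eqxx scale1r.
rewrite big1_seq ?add0r; last first.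
  by move=> l /andP[_]; rewrite mem_index_iota => /andP[_ hl]; rewrite ltn_eqF // scale0r.
rewrite big1_seq ?addr0 //.
move=> l /andP[_]; rewrite mem_index_iota => /andP[hl _].
by rewrite gtn_eqF // scale0r.
Qed.

Lemma inspan_fg k : inspan k (f k - g k).
Proof.
rewrite (gs_eq k) opprB addrC subrK big_seq.
apply: inspan_sum => l; rewrite mem_index_iota => /andP[_ hl].
by apply/inspanZ/inspan_g.
Qed.

Lemma inspan_f j k : (j < k)%N -> inspan k (f j).
Proof.
move=> hj; rewrite -(subrK (g j) (f j)); apply: inspanD; last exact: inspan_g.
exact: inspan_mono (ltnW hj) (inspan_fg j).
Qed.

Lemma inspan_orth k v : inspan k v -> dotv (g k) v = 0.
Proof.
move=> [a ->]; rewrite dotvC dotv_suml big_seq big1 // => l.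
rewrite mem_index_iota => /andP[_ hl].
by rewrite dotvZl dotvC gs_orth ?mulr0.
Qed.

Lemma pyth k c w : inspan k w ->
  dotv (c *: g k + w) (c *: g k + w) = c ^+ 2 * G k + dotv w w.
Proof.
move=> hw; rewrite !dotvDl !dotvDr !dotvZl !dotvZr (inspan_orth hw).
rewrite (dotvC w) (inspan_orth hw); ring.
Qed.

Lemma pyth_sum k (a : nat -> R) :
  dotv (\sum_(0 <= l < k) a l *: g l) (\sum_(0 <= l < k) a l *: g l)
  = \sum_(0 <= l < k) a l ^+ 2 * G l.
Proof.
elim: k => [|k IH]; first by rewrite !big_geq // dotv0l.
rewrite !big_nat_recr //= addrC pyth; last by exists a.
by rewrite IH addrC.
Qed.

End GS.


Section LLL.
Variable R : archiRcfType.
Variables m N : nat.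
Variable Bm : 'M[int]_(m, N).
Hypothesis hLLL : LLL_reduced R Bm.
Notation f := (rowf R Bm).
Notation g := (gs_vec f).
Notation G j := (dotv (g j) (g j)).

Lemma mu_sq i j : (j < i < m)%N -> mu f i j ^+ 2 <= 4^-1.
Proof.
move=> h; have := hLLL.1 i j h; rewrite -/(mu f i j) => hm.
rewrite -real_normK ?num_real //.
have -> : (4 : R)^-1 = 2^-1 ^+ 2 by rewrite exprVn; congr (_^-1); ring.
by rewrite lerXn2r ?nnegrE ?normr_ge0 // invr_ge0 ler0n.
Qed.

Lemma G_half i : (0 < i < m)%N -> G i.-1 <= 2 * G i.
Proof.
move=> /andP[h0 him]; have := hLLL.2 i; rewrite h0 him => /(_ isT).
move=> hl; change (gs_mu f i i.-1) with (mu f i i.-1) in hl.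
have hmu := mu_sq (i:=i) (j:=i.-1); rewrite prednK // leqnn him in hmu.
have := hmu isT => hmu'.
have hG := dotv_ge0 (g i.-1).
have : mu f i i.-1 ^+ 2 * G i.-1 <= 4^-1 * G i.-1 by apply: ler_wpM2r.
move=> ?; lra.
Qed.

Lemma G_mono l k : (l <= k < m)%N -> 2 ^+ l * G l <= 2 ^+ k * G k.
Proof.
elim: k => [|k IH] /andP[hlk hkm].
  by move: hlk; rewrite leqn0 => /eqP ->.
rewrite leq_eqVlt in hlk; case/orP: hlk => [/eqP -> //|hlk].
apply: le_trans (IH _) _; first by rewrite -ltnS hlk ltnW.
have := G_half (i := k.+1); rewrite /= hkm => /(_ isT) h.
rewrite exprS -mulrA mulrCA; apply: ler_wpM2l => //; exact: exprn_ge0.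
Qed.

Lemma sum_inv2 k : \sum_(0 <= l < k) ((2 : R) ^+ l)^-1 = 2 - 2 / 2 ^+ k.
Proof.
elim: k => [|k IH]; first by rewrite big_geq // expr0 divr1 subrr.
rewrite big_nat_recr //= IH exprS.
have hx : (2 : R) ^+ k != 0 by rewrite expf_eq0 pnatr_eq0 andbF.
set x := (2:R) ^+ k in hx *; clearbody x.
by field; rewrite hx.
Qed.

Lemma fk_bound k : (k < m)%N -> dotv (f k) (f k) <= 2 ^+ k * G k.
Proof.
move=> hk.
have Ef : f k = 1 *: g k + \sum_(0 <= l < k) mu f k l *: g l.
  by rewrite scale1r (gs_eq f k) subrK.
rewrite Ef pyth; last by exists (mu f k).
rewrite pyth_sum expr1n mul1r.
have hG : 0 <= G k := dotv_ge0 _.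
have hx : 1 <= (2 : R) ^+ k by rewrite exprn_ege1 // ler1n.
have hb : \sum_(0 <= l < k) mu f k l ^+ 2 * G l <=
          \sum_(0 <= l < k) 4^-1 * (2 ^+ k * G k) * ((2 : R) ^+ l)^-1.
  rewrite big_seq [X in _ <= X]big_seq; apply: ler_sum => l.
  rewrite mem_index_iota => /andP[_ hl].
  have hl0 : 0 <= G l := dotv_ge0 _.
  have h1 : mu f k l ^+ 2 * G l <= 4^-1 * G l.
    by apply: ler_wpM2r => //; apply: mu_sq; rewrite hl hk.
  apply: le_trans h1 _; rewrite -mulrA ler_wpM2l // ?invr_ge0 ?ler0n //.
  have h2l : 0 < (2 : R) ^+ l by rewrite exprn_gt0.
  rewrite ler_pdivlMr // mulrC; apply: G_mono; rewrite (ltnW hl) hk.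
  done.
rewrite -mulr_sumr sum_inv2 in hb.
have hx0 : (2 : R) ^+ k != 0 by rewrite expf_eq0 pnatr_eq0 andbF.
have E : 4^-1 * (2 ^+ k * G k) * (2 - 2 / 2 ^+ k) = 2^-1 * (2 ^+ k * G k) - 2^-1 * G k.
  by field.
rewrite E in hb.
set X := 2 ^+ k in hb hx *; nra.
Qed.
End LLL.


Section Vec.
Variable R : archiRcfType.

Lemma sq_sum n (a : 'I_n -> R) :
  (\sum_(i < n) a i) ^+ 2 <= n%:R * \sum_(i < n) a i ^+ 2.
Proof.
set S := \sum_(i < n) a i; set Q := \sum_(i < n) a i ^+ 2.
have h : \sum_(i < n) \sum_(j < n) (a i - a j) ^+ 2 = 2 * (n%:R * Q) - 2 * S ^+ 2.
  have -> : \sum_(i < n) \sum_(j < n) (a i - a j) ^+ 2 =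
            \sum_(i < n) (n%:R * a i ^+ 2 + Q - 2 * a i * S).
    apply: eq_bigr => i _.
    have -> : \sum_(j < n) (a i - a j) ^+ 2 =
              \sum_(j < n) (a i ^+ 2 + a j ^+ 2 - 2 * a i * a j).
      by apply: eq_bigr => j _; ring.
    rewrite sumrB big_split /= sumr_const card_ord -/Q /S mulr_sumr; congr (_ - _); by rewrite mulr_natl.
  rewrite sumrB big_split /= -mulr_sumr -/Q sumr_const card_ord.
  rewrite -mulr_suml -mulr_sumr -/S -mulr_natl; ring.
have : 0 <= \sum_(i < n) \sum_(j < n) (a i - a j) ^+ 2.
  by apply: sumr_ge0 => i _; apply: sumr_ge0 => j _; apply: sqr_ge0.
rewrite h; lra.
Qed.

Lemma sq_add k (u v : 'rV[R]_k) :
  dotv (u + v) (u + v) <= 2 * dotv u u + 2 * dotv v v.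
Proof.
have := dotv_ge0 (u - v).
rewrite !dotvDl !dotvDr !dotvNl !dotvNr (dotvC v u); lra.
Qed.

Lemma E_bound k p (u : 'rV[R]_k) (E : 'M[R]_(k, p)) :
  (forall i j, `|E i j| <= 2^-1) ->
  dotv (u *m E) (u *m E) <= (k * p)%:R / 4 * dotv u u.
Proof.
move=> hE.
have h1 : forall j, ((u *m E) 0 j) ^+ 2 <= k%:R * (4^-1 * dotv u u).
  move=> j; rewrite mxE; apply: le_trans (sq_sum _) _.
  rewrite ler_wpM2l ?ler0n // /dotv mulr_sumr; apply: ler_sum => i _.
  rewrite exprMn -expr2 mulrC ler_wpM2r ?sqr_ge0 //.
  rewrite -real_normK ?num_real //.
  have -> : (4 : R)^-1 = 2^-1 ^+ 2 by rewrite exprVn; congr (_^-1); ring.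
  by rewrite lerXn2r ?nnegrE ?normr_ge0 // invr_ge0 ler0n.
have -> : dotv (u *m E) (u *m E) = \sum_(j < p) ((u *m E) 0 j) ^+ 2.
  by apply: eq_bigr => j _; rewrite expr2.
apply: le_trans (ler_sum _ (fun j _ => h1 j)) _.
rewrite sumr_const card_ord natrM; lra.
Qed.
End Vec.


Section Lat.
Variable n : nat.
Implicit Types S T : 'rV[int]_n -> Prop.

Lemma zspan_ind S (Q : 'rV[int]_n -> Prop) :
  Q 0 -> (forall u v, Q u -> Q v -> Q (u + v)) ->
  (forall x z, S x -> Q (x *~ z)) -> forall v, zspan S v -> Q v.
Proof.
move=> h0 hD hS v [k [f [c [hf ->]]]].
elim/big_rec: _ => [//|t x _ hx]; apply: hD => //; exact: hS.
Qed.

Lemma zspan0 S : zspan S 0.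
Proof. by exists 0%N, (fun _ => 0), (fun _ => 0); split => [[]//|]; rewrite big_ord0. Qed.

Lemma zspan_elem S x : S x -> zspan S x.
Proof.
move=> hx; exists 1%N, (fun _ => x), (fun _ => 1); split => // .
by rewrite big_ord1 mulr1z.
Qed.

Lemma zspanD S u v : zspan S u -> zspan S v -> zspan S (u + v).
Proof.
move=> [k1 [f1 [c1 [h1 ->]]]] [k2 [f2 [c2 [h2 ->]]]].
pose F (t : 'I_(k1 + k2)) := match split t with inl a => f1 a | inr b => f2 b end.
pose C (t : 'I_(k1 + k2)) := match split t with inl a => c1 a | inr b => c2 b end.
have hl : forall a : 'I_k1, split (lshift k2 a) = inl a.
  by move=> a; exact: (unsplitK (inl a)).
have hr : forall b : 'I_k2, split (rshift k1 b) = inr b.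
  by move=> b; exact: (unsplitK (inr b)).
exists (k1 + k2)%N, F, C; split.
  by move=> t; rewrite /F; case: (split t).
rewrite big_split_ord /=; congr (_ + _); apply: eq_bigr => t _.
  by rewrite /F /C hl.
by rewrite /F /C hr.
Qed.

Lemma zspanZ S v z : zspan S v -> zspan S (v *~ z).
Proof.
move=> [k [f [c [h ->]]]]; exists k, f, (fun t => c t * z); split => //.
by rewrite mulrz_suml; apply: eq_bigr => t _; rewrite mulrzA.
Qed.

Lemma zspan_mono S T v : (forall x, S x -> T x) -> zspan S v -> zspan T v.
Proof.
move=> hST; apply: zspan_ind; [exact: zspan0|exact: zspanD|].
by move=> x z hx; apply/zspanZ/zspan_elem/hST.
Qed.

Lemma zspan_sub S T v : (forall x, S x -> zspan T x) -> zspan S v -> zspan T v.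
Proof.
move=> hST; apply: zspan_ind; [exact: zspan0|exact: zspanD|].
by move=> x z hx; apply/zspanZ/hST.
Qed.
End Lat.

Lemma mulmxz k n p (u : 'M[int]_(k, n)) (A : 'M[int]_(n, p)) z :
  (u *~ z) *m A = (u *m A) *~ z.
Proof. by rewrite -!scaler_int scalemxAl. Qed.

Lemma row_latticeP k n (A : 'M[int]_(k, n)) v :
  row_lattice A v <-> exists c : 'rV[int]_k, v = c *m A.
Proof.
split.
  apply: (@zspan_ind _ _ (fun v => exists c : 'rV[int]_k, v = c *m A)).
  - by exists 0; rewrite mul0mx.
  - by move=> u w [c1 ->] [c2 ->]; exists (c1 + c2); rewrite mulmxDl.
  - move=> x z [i ->]; exists ('e_i *~ z).
    by rewrite mulmxz -rowE.
move=> [c ->]; exists k, (fun t => row t A), (fun t => c 0 t); split.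
  by move=> t; exists t.
rewrite mulmx_sum_row; apply: eq_bigr => t _.
by rewrite -scaler_int intz.
Qed.


Section Main.
Variable R : archiRcfType.
Variables m N : nat.
Variable Bm : 'M[int]_(m, N).
Notation f := (rowf R Bm).
Notation g := (gs_vec f).
Notation G j := (dotv (g j) (g j)).

Lemma rowfE (j : 'I_m) : f j = intmx R (row j Bm).
Proof. by rewrite /rowf valK. Qed.

Lemma intmxM k n q (a : 'M[int]_(k, n)) (b : 'M[int]_(n, q)) :
  intmx R (a *m b) = intmx R a *m intmx R b.
Proof.
apply/matrixP => r s; rewrite !mxE rmorph_sum; apply: eq_bigr => t _.
by rewrite !mxE rmorphM.
Qed.

Lemma intmx_comb (d : 'rV[int]_m) :
  intmx R (d *m Bm) = \sum_(j < m) (d 0 j)%:~R *: f j.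
Proof.
rewrite intmxM mulmx_sum_row; apply: eq_bigr => j _.
by rewrite rowfE /intmx map_row mxE.
Qed.

Lemma lower_bound (d : 'rV[int]_m) (i : nat) :
  (exists j : 'I_m, (i <= j)%N && (d 0 j != 0)) ->
  exists k, (i <= k < m)%N /\ G k <= dotv (intmx R (d *m Bm)) (intmx R (d *m Bm)).
Proof.
move=> [j0 hj0].
pose cf (n : nat) : int := if insub n is Some j then d 0 j else 0.
have cfE : forall j : 'I_m, cf j = d 0 j by move=> j; rewrite /cf valK.
have Ey : intmx R (d *m Bm) = \sum_(0 <= n < m) (cf n)%:~R *: f n.
  rewrite intmx_comb big_mkord; apply: eq_bigr => j _; by rewrite cfE.
pose P n := ((i <= n < m)%N && (cf n != 0)).
have exP : exists n, P n by exists j0; rewrite /P cfE ltn_ord andbT.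
have bnd : forall n, P n -> (n <= m)%N.
  by move=> n /andP[/andP[_ /ltnW]].
case: (ex_maxnP exP bnd) => k /andP[/andP[hik hkm] hk] kmax.
exists k; split; first by rewrite hik hkm.
have tail : forall n, (k < n)%N -> cf n = 0.
  move=> n hn; apply/eqP; rewrite -[_ == _]negbK; apply/negP => hc.
  have hnm : (n < m)%N.
    rewrite ltnNge; apply/negP => hmn.
    by move: hc; rewrite /cf insubF ?eqxx // ltnNge hmn.
  have : P n by rewrite /P hc andbT hnm (leq_trans hik (ltnW hn)).
  by move=> /kmax; rewrite leqNgt hn.
rewrite Ey (big_cat_nat (leq0n k.+1) hkm) /= [X in _ + X]big1_seq ?addr0; last first.
  by move=> n /andP[_]; rewrite mem_index_iota => /andP[hn _]; rewrite tail // mulr0z scale0r.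
rewrite big_nat_recr //=.
set c := (cf k)%:~R : R.
have -> : \sum_(0 <= n < k) (cf n)%:~R *: f n + c *: f k =
   c *: g k + (\sum_(0 <= n < k) (cf n)%:~R *: f n + c *: (f k - g k)).
  by rewrite scalerBr [RHS]addrCA [c *: g k + _]addrC subrK.
rewrite pyth; last first.
  apply: inspanD; last by apply/inspanZ/inspan_fg.
  rewrite big_seq; apply: inspan_sum => n; rewrite mem_index_iota => /andP[_ hn].
  by apply/inspanZ/inspan_f.
have hc : 1 <= c ^+ 2.
  rewrite /c -rmorphXn /= ler1z.
  have : cf k != 0 := hk.
  move: (cf k) => z hz; nia.
have hGk : 0 <= G k := dotv_ge0 _.
have hw := dotv_ge0 (\sum_(0 <= n < k) (cf n)%:~R *: f n + c *: (f k - g k)).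
nra.
Qed.
End Main.


Lemma PE_bounds (R : archiRcfType) (m p : nat) (hpm : (p <= m)%N)
  (P : 'M[R]_(m, p)) (beta : R) (Pbeta : 'M[int]_(m, p))
  (hPbeta : forall (i : 'I_m) (j : 'I_p),
      `|(Pbeta i j)%:~R - beta * P i j| <= 2^-1) (u : 'rV[R]_m) :
  dotv (u *m intmx R Pbeta) (u *m intmx R Pbeta) <=
     2 * (beta ^+ 2 * dotv (u *m P) (u *m P)) + (m%:R ^+ 2 / 2) * dotv u u /\
  beta ^+ 2 * dotv (u *m P) (u *m P) <=
     2 * dotv (u *m intmx R Pbeta) (u *m intmx R Pbeta) + (m%:R ^+ 2 / 2) * dotv u u.
Proof.
pose E := intmx R Pbeta - beta *: P.
have hE : forall i j, `|E i j| <= 2^-1.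
  by move=> i j; rewrite /E !mxE.
have hEb := E_bound u hE.
have hmp : ((m * p)%:R / 4 : R) <= m%:R ^+ 2 / 4.
  rewrite ler_wpM2r ?invr_ge0 ?ler0n // natrM expr2 ler_wpM2l ?ler0n //.
  by rewrite ler_nat.
have hu := dotv_ge0 u.
have hEb' : dotv (u *m E) (u *m E) <= m%:R ^+ 2 / 4 * dotv u u.
  apply: le_trans hEb _; exact: ler_wpM2r.
have e1 : u *m intmx R Pbeta = beta *: (u *m P) + u *m E.
  by rewrite /E mulmxBr -scalemxAr addrC subrK.
have e2 : beta *: (u *m P) = u *m intmx R Pbeta + (- (u *m E)).
  by rewrite e1 addrK.
have hs : dotv (beta *: (u *m P)) (beta *: (u *m P)) = beta ^+ 2 * dotv (u *m P) (u *m P).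
  by rewrite dotvZl dotvZr mulrA expr2.
split.
  rewrite e1; apply: le_trans (sq_add _ _) _; rewrite hs; lra.
rewrite -hs e2; apply: le_trans (sq_add _ _) _.
rewrite dotvNl dotvNr opprK; lra.
Qed.

Lemma dotv_row_mx (R : archiRcfType) a b (u : 'rV[R]_a) (v : 'rV[R]_b) :
  dotv (row_mx u v) (row_mx u v) = dotv u u + dotv v v.
Proof.
rewrite /dotv big_split_ord /=; congr (_ + _); apply: eq_bigr => j _.
  by rewrite row_mxEl.
by rewrite row_mxEr.
Qed.

Lemma intmx_row_mx (R : archiRcfType) a b (u : 'rV[int]_a) (v : 'rV[int]_b) :
  intmx R (row_mx u v) = row_mx (intmx R u) (intmx R v).
Proof. exact: map_row_mx. Qed.

Lemma rnorm_lt (R : archiRcfType) n (v : 'rV[R]_n) c :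
  0 <= c -> (rnorm v < c) = (dotv v v < c ^+ 2).
Proof.
move=> hc; rewrite -rnorm_sq ltr_pXn2r // nnegrE //; exact: rnorm_ge0.
Qed.

Lemma rnorm_leE (R : archiRcfType) n (v : 'rV[R]_n) c :
  0 <= c -> (rnorm v <= c) = (dotv v v <= c ^+ 2).
Proof.
move=> hc; rewrite -rnorm_sq ler_pXn2r // nnegrE //; exact: rnorm_ge0.
Qed.


Unset Implicit Arguments.
Set Strict Implicit.
Theorem lemma4p2 (R : archiRcfType) (m p : nat)
  (hm : (2 <= m)%N) (hp1 : (1 <= p)%N) (hpm : (p <= m)%N)
  (P : 'M[R]_(m, p)) (beta : R) (hbeta : 0 < beta)
  (Pbeta : 'M[int]_(m, p))
  (hPbeta : forall (i : 'I_m) (j : 'I_p),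
      `|(Pbeta i j)%:~R - beta * P i j| <= 2^-1)
  (Bm : 'M[int]_(m, p + m))
  (hbasis : lattice_basis Bm (row_mx Pbeta 1%:M))
  (hLLL : LLL_reduced R Bm)
  (hsorted : forall i j : 'I_m, (i <= j)%N ->
      rnorm (intmx R (row i Bm)) <= rnorm (intmx R (row j Bm)))
  (i : nat) (hi : (i < m)%N) (B : R)
  (hB1 : Bnorm R Bm i <= B) (hB2 : B <= kappa R m * Bnorm R Bm i.+1) :
  forall x : 'rV[int]_m,
    Lambda_Beps P B (m%:R * B / beta) x <->
    zspan (fun v : 'rV[int]_m =>
             exists j : 'I_m, (j < i)%N /\ v = rsubmx (row j Bm)) x.
Proof.
set A := row_mx Pbeta 1%:M.
have hB0 : 0 <= B.
  apply: le_trans hB1; case: (i) => [|i'] /=; [exact: lexx|exact: rnorm_ge0].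
have hm0 : (2 : R) <= m%:R by rewrite ler_nat.
have hbeta2 : 0 < beta ^+ 2 by rewrite exprn_gt0.
have inA : forall v, row_lattice Bm v -> exists z : 'rV[int]_m, v = row_mx (z *m Pbeta) z.
  move=> v /(proj1 hbasis v) /row_latticeP [z ->]; exists z.
  by rewrite /A mul_mx_row mulmx1.
have Pb := PE_bounds hpm hPbeta.
move=> x; split.
-
  apply: zspan_sub => {}x [hxB hxP].
  set y := row_mx (x *m Pbeta) x.
  have hy : row_lattice Bm y.
    apply/(proj1 hbasis y)/row_latticeP; exists x.
    by rewrite /A mul_mx_row mulmx1.
  have [d hd] := (row_latticeP Bm y).1 hy.
  have hz : forall j : 'I_m, (i <= j)%N -> d 0 j = 0.
    move=> j hj; apply/eqP; rewrite -[_ == _]negbK; apply/negP => hdj.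
    have := @lower_bound R m (p + m) Bm d i.
    case; first by exists j; rewrite hj hdj.
    move=> k [/andP[hik hkm] hGk]; rewrite -hd in hGk.
    set ix := intmx R x in hxB hxP.
    set D := dotv (intmx R y) (intmx R y) in hGk.
    have hD : D = dotv (ix *m intmx R Pbeta) (ix *m intmx R Pbeta) + dotv ix ix.
      by rewrite /D /y intmx_row_mx dotv_row_mx intmxM.
    have hx2 : dotv ix ix <= B ^+ 2 by rewrite -rnorm_leE.
    have hmB : 0 <= m%:R * B / beta by rewrite divr_ge0 ?mulr_ge0 ?ler0n // ltW.
    have hxP2 : beta ^+ 2 * dotv (ix *m P) (ix *m P) < m%:R ^+ 2 * B ^+ 2.
      move: hxP; rewrite rnorm_lt // expr_div_n ltr_pdivlMr // mulrC exprMn.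
      done.
    have [h1 _] := Pb ix.
    have hfk := fk_bound hLLL hkm.
    set X := (2 : R) ^+ m.-1.
    have hX0 : 0 < X by rewrite exprn_gt0.
    have hGk0 : 0 <= dotv (gs_vec (rowf R Bm) k) (gs_vec (rowf R Bm) k) by apply: dotv_ge0.
    have h2k : (2 : R) ^+ k <= X.
      by rewrite ler_eXn2l ?ltr1n // -ltnS prednK // ltnW.
    have hfkX : dotv (rowf R Bm k) (rowf R Bm k) <= X * dotv (gs_vec (rowf R Bm) k) (gs_vec (rowf R Bm) k).
      apply: le_trans hfk _; exact: ler_wpM2r.
    have hsi : dotv (rowf R Bm i) (rowf R Bm i) <= dotv (rowf R Bm k) (rowf R Bm k).
      rewrite (@rowfE _ _ _ Bm (Ordinal hi)) (@rowfE _ _ _ Bm (Ordinal hkm)).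
      by rewrite -rnorm_le; apply: hsorted.
    set b := rnorm (rowf R Bm i) in hB2.
    have hb2 : b ^+ 2 = dotv (rowf R Bm i) (rowf R Bm i) by rewrite /b rnorm_sq.
    have hb0 : 0 <= b by apply: rnorm_ge0.
    set s := Num.sqrt ((2 : R) ^+ m.+1) in hB2.
    have hs2 : s ^+ 2 = 4 * X.
      rewrite /s sqr_sqrtr ?exprn_ge0 // /X.
      have -> : m.+1 = (m.-1).+2 by rewrite prednK // ltnW.
      by rewrite exprS exprS; ring.
    have hs0 : 0 < s.
      rewrite /s sqrtr_gt0 exprn_gt0 //.
    have hmBs : m%:R * B * s <= b.
      move: hB2; rewrite /kappa -/s.
      have hm0' : 0 < m%:R :> R by lra.
      rewrite -(ler_pM2l hm0') mulrA mulrA mulfV ?gt_eqF // mul1r.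
      by move=> h; have := ler_wpM2r (ltW hs0) h; rewrite /Bnorm -/b (mulrC s^-1) divfK // gt_eqF.
    have hsq : (m%:R * B * s) ^+ 2 <= b ^+ 2.
      have h0 : 0 <= m%:R * B * s.
        by apply: mulr_ge0; [apply: mulr_ge0 => //; lra|exact: ltW].
      by rewrite ler_pXn2r ?nnegrE.
    rewrite !exprMn hs2 hb2 in hsq.
    have h4 : 4 * (m%:R ^+ 2 * B ^+ 2) <= dotv (gs_vec (rowf R Bm) k) (gs_vec (rowf R Bm) k).
      have : X * (4 * (m%:R ^+ 2 * B ^+ 2)) <= X * dotv (gs_vec (rowf R Bm) k) (gs_vec (rowf R Bm) k).
        apply: le_trans hfkX; apply: le_trans hsi; apply: le_trans hsq.
        by rewrite (_ : X * _ = m%:R ^+ 2 * B ^+ 2 * (4 * X)); last ring.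
      by rewrite ler_pM2l.
    have hm2 : 4 * B ^+ 2 <= m%:R ^+ 2 * B ^+ 2.
      apply: ler_wpM2r; first exact: sqr_ge0.
      by rewrite (_ : 4 = 2 ^+ 2 :> R); [rewrite ler_pXn2r ?nnegrE ?ler0n //; lra | ring].
    have hxx := dotv_ge0 ix.
    have h5 : m%:R ^+ 2 / 2 * dotv ix ix <= m%:R ^+ 2 / 2 * B ^+ 2.
      by apply: ler_wpM2l => //; apply: divr_ge0; [exact: sqr_ge0|lra].
    lra.
  have ex : x = rsubmx y by rewrite /y row_mxKr.
  rewrite ex hd -mulmx_rsub mulmx_sum_row.
  exists i, (fun t : 'I_i => rsubmx (row (widen_ord (ltnW hi) t) Bm)),
    (fun t => d 0 (widen_ord (ltnW hi) t)); split.
    by move=> t; exists (widen_ord (ltnW hi) t); split => //=; exact: ltn_ord.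
  rewrite (bigID (fun j : 'I_m => (j < i)%N)) /= [X in _ + X]big1 ?addr0; last first.
    by move=> j; rewrite -leqNgt => hj; rewrite hz // scale0r.
  rewrite (big_ord_narrow (ltnW hi)); apply: eq_bigr => t _.
  rewrite -scaler_int intz; congr (_ *: _).
  by apply/rowP => s; rewrite !mxE.
-
  apply: zspan_mono => {}x [j [hji ->]].
  have [z hz] : exists z : 'rV[int]_m, row j Bm = row_mx (z *m Pbeta) z.
    by apply: inA; apply: zspan_elem; exists j.
  rewrite hz row_mxKr.
  have hi0 : (0 < i)%N by apply: leq_ltn_trans hji.
  set D := dotv (intmx R (row j Bm)) (intmx R (row j Bm)).
  have hD : D = dotv (intmx R z *m intmx R Pbeta) (intmx R z *m intmx R Pbeta)
                + dotv (intmx R z) (intmx R z).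
    by rewrite /D hz intmx_row_mx dotv_row_mx intmxM.
  have hDB : D <= B ^+ 2.
    rewrite -rnorm_leE //; apply: le_trans hB1.
    have hi1 : (i.-1 < m)%N by rewrite prednK // ltnW.
    rewrite /Bnorm; case: (i) hi0 hi1 hji => [//|i'] _ /= hi1 hji.
    rewrite (@rowfE _ _ _ Bm (Ordinal hi1)); exact: hsorted.
  have hD0 : 0 < D.
    rewrite lt_def dotv_ge0 andbT; apply/eqP => /dotv_eq0 h0.
    have : (delta_mx 0 j : 'rV[int]_m) *m Bm = 0.
      rewrite -rowE; apply/rowP => t; have := congr1 (fun M : 'rV[R]_(p + m) => M 0 t) h0.
      by rewrite !mxE => /eqP; rewrite intr_eq0 => /eqP ->.
    move=> /(proj2 hbasis) /rowP /(_ j); rewrite !mxE eqxx /=.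
    by rewrite eqxx.
  have [_ h2] := Pb (intmx R z).
  have hz0 := dotv_ge0 (intmx R z *m intmx R Pbeta).
  have hzz := dotv_ge0 (intmx R z).
  split.
    by rewrite /znorm rnorm_leE //; lra.
  rewrite rnorm_lt; last by rewrite divr_ge0 ?mulr_ge0 ?ler0n // ltW.
  rewrite expr_div_n ltr_pdivlMr //.
  have hm2 : 4 <= m%:R ^+ 2 :> R by rewrite (_ : 4 = 2 ^+ 2 :> R); [rewrite ler_pXn2r ?nnegrE ?ler0n //; lra | ring].
  rewrite mulrC exprMn; nra.
Qed.
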